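(* Let $k\ge2$, let $\theta_1,\dots,\theta_k\in[-\frac{\pi}{2},\frac{\pi}{2}]$ be pairwise distinct, $\theta_{\min}=\min_{p\ne j}|\theta_p-\theta_j|$, and $a=(a_1,\dots,a_k)^T$ with $|a_j|\ge m_{\min}>0$. Let $\hat\theta_1,\dots,\hat\theta_k\in[-\frac{\pi}{2},\frac{\pi}{2}]$ be pairwise distinct and $\hat a=(\hat a_1,\dots,\hat a_k)^T\in\mathbb C^k$ such that $\|\hat A\hat a-Aa\|_2<\sigma$, where $\hat A=(\phi_{2k-1}(e^{i\hat\theta_1}),\dots,\phi_{2k-1}(e^{i\hat\theta_k}))$ and $A=(\phi_{2k-1}(e^{i\theta_1}),\dots,\phi_{2k-1}(e^{i\theta_k}))$. Then $$\|\eta_{k,k}(e^{i\theta_1},\dots,e^{i\theta_k},e^{i\hat\theta_1},\dots,e^{i\hat\theta_k})\|_\infty<\frac{2^k\pi^{k-1}}{\zeta(k)\,\theta_{\min}^{k-1}}\,\frac{\sigma}{m_{\min}}.$$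
   Context: $\phi_s(z)=(1,z,\dots,z^s)^T$. For $z_1,\dots,z_p,\hat z_1,\dots,\hat z_q\in\mathbb C$, $\eta_{p,q}(z_1,\dots,z_p,\hat z_1,\dots,\hat z_q)\in\mathbb R^p$ is the vector whose $j$-th entry is $\prod_{l=1}^q|z_j-\hat z_l|$. For an integer $k\ge1$: $\zeta(k)=\big((\tfrac{k-1}{2})!\big)^2$ if $k$ is odd, $\zeta(k)=(\tfrac{k}{2})!(\tfrac{k-2}{2})!$ if $k$ is even. *)

(* Defs.v *)
From Stdlib Require Import Reals Lra Lia List Arith.
Import ListNotations.
Open Scope R_scope.

Definition Cplx := (R * R)%type.
Definition C0 : Cplx := (0, 0).
Definition C1 : Cplx := (1, 0).
Definition Cadd (z w : Cplx) : Cplx := (fst z + fst w, snd z + snd w).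
Definition Csub (z w : Cplx) : Cplx := (fst z - fst w, snd z - snd w).
Definition Cmul (z w : Cplx) : Cplx :=
  (fst z * fst w - snd z * snd w, fst z * snd w + snd z * fst w).
Fixpoint Cpow (z : Cplx) (n : nat) : Cplx :=
  match n with O => C1 | S m => Cmul z (Cpow z m) end.
Definition Cmod (z : Cplx) : R := sqrt (fst z ^ 2 + snd z ^ 2).
Definition Cexpi (t : R) : Cplx := (cos t, sin t).

Definition Csum (n : nat) (f : nat -> Cplx) : Cplx := fold_right Cadd C0 (map f (seq 0 n)).
Definition Rsum (n : nat) (f : nat -> R) : R := fold_right Rplus 0 (map f (seq 0 n)).
Definition Rprod (n : nat) (f : nat -> R) : R := fold_right Rmult 1 (map f (seq 0 n)).

(* phi_s(z) = (1, z, ..., z^s)^T : entry r (0 <= r <= s) is z^r. *)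
Definition phi (s : nat) (z : Cplx) (r : nat) : Cplx := Cpow z r.

(* (A a)_r where A = (phi_s(z_1), ..., phi_s(z_k)) (columns), a in Cplx^k. *)
Definition matvec (s k : nat) (z : nat -> Cplx) (a : nat -> Cplx) (r : nat) : Cplx :=
  Csum k (fun j => Cmul (phi s (z j) r) (a j)).

Definition Cnorm2 (n : nat) (v : nat -> Cplx) : R := sqrt (Rsum n (fun r => Cmod (v r) ^ 2)).

Definition Rinf_norm (n : nat) (v : nat -> R) : R :=
  fold_right Rmax 0 (map (fun j => Rabs (v j)) (seq 0 n)).

Definition eta (p q : nat) (z zh : nat -> Cplx) (j : nat) : R :=
  Rprod q (fun l => Cmod (Csub (z j) (zh l))).

Definition zeta (k : nat) : R :=
  if Nat.odd k then (INR (fact ((k - 1) / 2))) ^ 2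
  else INR (fact (k / 2)) * INR (fact ((k - 2) / 2)).

Definition theta_min (th : nat -> R) (k : nat) : R :=
  let l := flat_map (fun p => map (fun j => Rabs (th p - th j))
              (filter (fun j => negb (Nat.eqb p j)) (seq 0 k))) (seq 0 k) in
  match l with nil => 0 | x :: t => fold_right Rmin x t end.

(* Main.v *)
Require Import Defs.
From Stdlib Require Import Reals Lra Lia List Arith Permutation.
From Coquelicot Require Complex.
Import ListNotations.
Open Scope R_scope.

Lemma Cmod_tri z w : Cmod (Cadd z w) <= Cmod z + Cmod w.
Proof. exact (Complex.Cmod_triangle z w). Qed.
Lemma Cmod_mul z w : Cmod (Cmul z w) = Cmod z * Cmod w.
Proof. exact (Complex.Cmod_mult z w). Qed.
Lemma Cmod_ge0 z : 0 <= Cmod z. Proof. exact (Complex.Cmod_ge_0 z). Qed.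
Lemma Cmod_C0 : Cmod C0 = 0.
Proof. unfold Cmod, C0; cbn [fst snd]. replace (0^2+0^2) with 0 by ring. apply sqrt_0. Qed.
Lemma Cmod_C1 : Cmod Defs.C1 = 1.
Proof. unfold Cmod, Defs.C1; cbn [fst snd]. replace (1^2+0^2) with 1 by ring. apply sqrt_1. Qed.
Lemma Cmod_sub z w : Cmod (Csub z w) <= Cmod z + Cmod w.
Proof.
  replace (Csub z w) with (Cadd z (Cmul (-1,0) w)).
  - eapply Rle_trans; [apply Cmod_tri|]. rewrite Cmod_mul.
    replace (Cmod (-1,0)) with 1. lra.
    unfold Cmod; cbn [fst snd]. replace ((-1)^2+0^2) with 1 by ring. now rewrite sqrt_1.
  - destruct z, w; unfold Cadd, Csub, Cmul; simpl; f_equal; ring.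
Qed.
Lemma Cmod_opp_sub z : Cmod (Csub C0 z) = Cmod z.
Proof. destruct z; unfold Cmod, Csub, C0; simpl. f_equal. ring. Qed.

Ltac ceq := unfold Cadd, Csub, Cmul, C0, Defs.C1 in *; apply injective_projections; cbn [fst snd]; ring.

Lemma fold_Cadd_app l x : fold_right Cadd C0 (l ++ [x]) = Cadd (fold_right Cadd C0 l) x.
Proof. induction l; simpl. ceq. rewrite IHl. ceq. Qed.
Lemma Csum_S n f : Csum (S n) f = Cadd (Csum n f) (f n).
Proof. unfold Csum. rewrite seq_S, map_app. simpl. apply fold_Cadd_app. Qed.
Lemma Csum_0 f : Csum 0 f = C0. Proof. reflexivity. Qed.
Lemma Csum_ext n f g : (forall r, (r < n)%nat -> f r = g r) -> Csum n f = Csum n g.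
Proof. induction n; intros H. reflexivity. rewrite !Csum_S, IHn, H; auto. Qed.
Lemma Csum_sub n f g : Csum n (fun r => Csub (f r) (g r)) = Csub (Csum n f) (Csum n g).
Proof. induction n. rewrite !Csum_0. ceq. rewrite !Csum_S, IHn. ceq. Qed.
Lemma Csum_mull n c f : Csum n (fun r => Cmul c (f r)) = Cmul c (Csum n f).
Proof. induction n. rewrite !Csum_0. ceq. rewrite !Csum_S, IHn. ceq. Qed.
Lemma Csum_add n f g : Csum n (fun r => Cadd (f r) (g r)) = Cadd (Csum n f) (Csum n g).
Proof. induction n. rewrite !Csum_0. ceq. rewrite !Csum_S, IHn. ceq. Qed.
Lemma Csum_zero n f : (forall r, (r < n)%nat -> f r = C0) -> Csum n f = C0.
Proof. induction n; intros H. reflexivity. rewrite Csum_S, IHn, H; auto. ceq. Qed.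
Lemma Csum_single n j f : (j < n)%nat -> (forall r, (r < n)%nat -> r <> j -> f r = C0) -> Csum n f = f j.
Proof.
  induction n; intros Hj H. lia. rewrite Csum_S.
  destruct (Nat.eq_dec j n).
  - subst. rewrite Csum_zero. ceq. intros; apply H; lia.
  - rewrite IHn by (try lia; intros; apply H; lia). rewrite (H n) by lia. ceq.
Qed.

Lemma Csum_swap n m f : Csum n (fun r => Csum m (fun l => f r l)) = Csum m (fun l => Csum n (fun r => f r l)).
Proof.
  induction n. rewrite Csum_0. symmetry. apply Csum_zero. intros; apply Csum_0.
  rewrite Csum_S, IHn. rewrite <- Csum_add. apply Csum_ext. intros. now rewrite Csum_S.
Qed.
Lemma fold_Rplus_app l x : fold_right Rplus 0 (l ++ [x]) = fold_right Rplus 0 l + x.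
Proof. induction l; simpl. ring. rewrite IHl. ring. Qed.
Lemma Rsum_S n f : Rsum (S n) f = Rsum n f + f n.
Proof. unfold Rsum. rewrite seq_S, map_app. simpl. apply fold_Rplus_app. Qed.
Lemma Rsum_0 f : Rsum 0 f = 0. Proof. reflexivity. Qed.
Lemma Rsum_le n f g : (forall r, (r < n)%nat -> f r <= g r) -> Rsum n f <= Rsum n g.
Proof. induction n; intros H. rewrite !Rsum_0; lra. rewrite !Rsum_S. pose proof (H n ltac:(lia)). specialize (IHn (fun r Hr => H r ltac:(lia))). lra. Qed.
Lemma Rsum_ge0 n f : (forall r, (r < n)%nat -> 0 <= f r) -> 0 <= Rsum n f.
Proof. induction n; intros H. rewrite Rsum_0; lra. rewrite Rsum_S.
  pose proof (H n ltac:(lia)). specialize (IHn (fun r Hr => H r ltac:(lia))). lra. Qed.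
Lemma Rsum_mulr n f c : Rsum n (fun r => f r * c) = Rsum n f * c.
Proof. induction n. rewrite !Rsum_0; ring. rewrite !Rsum_S, IHn. ring. Qed.
Lemma Rsum_term n f r : (r < n)%nat -> (forall i, (i < n)%nat -> 0 <= f i) -> f r <= Rsum n f.
Proof.
  induction n; intros Hr H. lia. rewrite Rsum_S.
  destruct (Nat.eq_dec r n).
  - subst. pose proof (Rsum_ge0 n f (fun i Hi => H i ltac:(lia))). lra.
  - pose proof (IHn ltac:(lia) (fun i Hi => H i ltac:(lia))). pose proof (H n ltac:(lia)). lra.
Qed.
Lemma Cmod_Csum n f : Cmod (Csum n f) <= Rsum n (fun r => Cmod (f r)).
Proof. induction n. rewrite Csum_0, Rsum_0, Cmod_C0; lra.
  rewrite Csum_S, Rsum_S. eapply Rle_trans; [apply Cmod_tri|]. lra. Qed.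
Lemma Cmod_le_norm2 n v r : (r < n)%nat -> Cmod (v r) <= Cnorm2 n v.
Proof.
  intros Hr. unfold Cnorm2.
  rewrite <- (sqrt_pow2 (Cmod (v r))) by apply Cmod_ge0.
  apply sqrt_le_1_alt. apply (Rsum_term n (fun r => Cmod (v r) ^ 2)); auto.
  intros; apply pow2_ge_0.
Qed.

Definition pshift (c : nat -> Cplx) (r : nat) : Cplx := match r with O => C0 | S r' => c r' end.
Definition plin (w : Cplx) (c : nat -> Cplx) (r : nat) : Cplx := Csub (pshift c r) (Cmul w (c r)).
Definition pone (r : nat) : Cplx := if Nat.eqb r 0 then Defs.C1 else C0.
Definition pcoef (ws : list Cplx) : nat -> Cplx := fold_right plin pone ws.
Definition peval (N : nat) (c : nat -> Cplx) (x : Cplx) : Cplx := Csum N (fun r => Cmul (c r) (Cpow x r)).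
Definition cprod (ws : list Cplx) (x : Cplx) : Cplx := fold_right (fun w acc => Cmul (Csub x w) acc) Defs.C1 ws.

Lemma pcoef_deg ws r : (length ws < r)%nat -> pcoef ws r = C0.
Proof.
  revert r; induction ws as [|w ws IH]; intros r Hr; simpl in *.
  - unfold pone. destruct r; [lia|reflexivity].
  - unfold plin, pshift. destruct r as [|r]; [lia|]. rewrite IH by lia. rewrite IH by lia. ceq.
Qed.

Lemma peval_shift N c x : peval (S N) (pshift c) x = Cmul x (peval N c x).
Proof.
  unfold peval. induction N.
  - rewrite Csum_S, !Csum_0. simpl. ceq.
  - rewrite Csum_S, IHN, Csum_S. simpl. ceq.
Qed.

Lemma peval_lin N w c x : c N = C0 -> peval (S N) (plin w c) x = Cmul (Csub x w) (peval N c x).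
Proof.
  intros H. unfold plin. unfold peval at 1.
  rewrite (Csum_ext _ _ (fun r => Csub (Cmul (pshift c r) (Cpow x r)) (Cmul w (Cmul (c r) (Cpow x r))))).
  2:{ intros. ceq. }
  rewrite Csum_sub, Csum_mull. fold (peval (S N) (pshift c) x). rewrite peval_shift.
  rewrite Csum_S, H. fold (peval N c x). ceq.
Qed.

Lemma peval_pcoef ws N x : (length ws < N)%nat -> peval N (pcoef ws) x = cprod ws x.
Proof.
  revert N; induction ws as [|w ws IH]; intros N HN; simpl in *.
  - unfold peval. rewrite (Csum_single N 0); auto.
    + unfold pone; simpl. ceq.
    + intros r _ Hr. unfold pone. destruct (Nat.eqb_spec r 0); [lia|]. ceq.
  - destruct N as [|N]; [lia|]. rewrite peval_lin. now rewrite IH by lia.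
    apply pcoef_deg; lia.
Qed.

Lemma Rsum_shift N c : Rsum (S N) (fun r => Cmod (pshift c r)) = Rsum N (fun r => Cmod (c r)).
Proof.
  induction N. rewrite Rsum_S, !Rsum_0. simpl. rewrite Cmod_C0. ring.
  rewrite Rsum_S, IHN, Rsum_S. reflexivity.
Qed.

Lemma Rsum_mono_n N f : (forall r, 0 <= f r) -> Rsum N f <= Rsum (S N) f.
Proof. intros H. rewrite Rsum_S. pose proof (H N). lra. Qed.

Lemma Rsum_plin N w c : Rsum N (fun r => Cmod (plin w c r)) <= (1 + Cmod w) * Rsum N (fun r => Cmod (c r)).
Proof.
  eapply Rle_trans.
  - apply (Rsum_le N _ (fun r => Cmod (pshift c r) + Cmod w * Cmod (c r))).
    intros r _. unfold plin. rewrite <- Cmod_mul. apply Cmod_sub.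
  - assert (E: forall M, Rsum M (fun r => Cmod (pshift c r) + Cmod w * Cmod (c r)) =
       Rsum M (fun r => Cmod (pshift c r)) + Cmod w * Rsum M (fun r => Cmod (c r))).
    { induction M. rewrite !Rsum_0; ring. rewrite !Rsum_S, IHM. ring. }
    rewrite E.
    assert (Rsum N (fun r => Cmod (pshift c r)) <= Rsum N (fun r => Cmod (c r))).
    { destruct N. rewrite !Rsum_0; lra. rewrite Rsum_shift. apply Rsum_mono_n. intros; apply Cmod_ge0. }
    pose proof (Cmod_ge0 w). lra.
Qed.

Lemma Rsum_pone N : Rsum N (fun r => Cmod (pone r)) <= 1.
Proof.
  assert (forall N, Rsum N (fun r => Cmod (pone r)) = if Nat.eqb N 0 then 0 else 1).
  { induction N0. reflexivity. rewrite Rsum_S, IHN0. unfold pone.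
    destruct N0; simpl. rewrite Cmod_C1; ring. rewrite Cmod_C0; ring. }
  rewrite H. destruct (Nat.eqb N 0); lra.
Qed.

Lemma Rsum_pcoef ws N : Rsum N (fun r => Cmod (pcoef ws r)) <= fold_right Rmult 1 (map (fun w => 1 + Cmod w) ws).
Proof.
  induction ws as [|w ws IH]; simpl. apply Rsum_pone.
  eapply Rle_trans. apply Rsum_plin. pose proof (Cmod_ge0 w).
  apply Rmult_le_compat_l; lra.
Qed.

Lemma cprod_zero ws w : In w ws -> cprod ws w = C0.
Proof.
  induction ws as [|v ws IH]; simpl; intros H. contradiction.
  destruct H as [->|H]. ceq. rewrite IH by auto. ceq.
Qed.

Lemma Cmod_cprod ws x : Cmod (cprod ws x) = fold_right Rmult 1 (map (fun w => Cmod (Csub x w)) ws).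
Proof. induction ws; simpl. apply Cmod_C1. rewrite Cmod_mul, IHws. reflexivity. Qed.

Lemma sl x : sin_lb x = x - x^3/6 + x^5/120 - x^7/5040.
Proof. unfold sin_lb, sin_approx, sin_term. cbn [sum_f_R0 Nat.mul Nat.add].
rewrite !INR_IZR_INZ. cbn -[IZR]. field. Qed.
Lemma cl x : cos_lb x = 1 - x^2/2 + x^4/24 - x^6/720.
Proof. unfold cos_lb, cos_approx, cos_term. cbn [sum_f_R0 Nat.mul Nat.add].
rewrite !INR_IZR_INZ. cbn -[IZR]. field. Qed.

Lemma PI_gt3 : 3 < PI. Proof. pose proof PI2_3_2. lra. Qed.

Lemma jordan x : 0 <= x <= PI / 2 -> 2 / PI * x <= sin x.
Proof.
  intros [H0 H1]. pose proof PI_gt3. pose proof PI_4.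
  assert (Hp : 0 < PI) by lra.
  destruct (Rle_lt_dec x 1).
  - destruct (SIN x) as [Hs _]; try lra. rewrite sl in Hs.
    assert (2 / PI <= 5/6).
    { apply Rmult_le_reg_r with PI; auto. field_simplify; lra. }
    assert (x^3/6 <= x/6) by (simpl; nra).
    assert (0 <= x^5/120 - x^7/5040).
    { assert (0 <= x^5) by (apply pow_le; lra). assert (x^2 <= 1) by nra.
      replace (x^7) with (x^5*x^2) by ring. nra. }
    assert (2/PI*x <= 5/6*x) by (apply Rmult_le_compat_r; lra). lra.
  - rewrite <- cos_shift. set (y := PI/2 - x).
    destruct (COS y) as [Hc _]; unfold y; try lra. fold y. rewrite cl in Hc.
    assert (0 <= y^4/24 - y^6/720).
    { assert (0 <= y) by (unfold y; lra). assert (y <= 1) by (unfold y; lra).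
      assert (0 <= y^4) by (apply pow_le; lra). assert (y^2 <= 1) by nra.
      replace (y^6) with (y^4*y^2) by ring. nra. }
    assert (y^2/2 <= 2 * y / PI).
    { assert (0 <= y) by (unfold y; lra). assert (y <= 1) by (unfold y; lra).
      apply Rmult_le_reg_r with PI; auto. field_simplify; try lra. simpl. nra. }
    replace (2/PI*x) with (1 - 2 * y / PI) by (unfold y; field; lra). lra.
Qed.

Lemma jordan_abs h : Rabs h <= PI / 2 -> 2 / PI * Rabs h <= Rabs (sin h).
Proof.
  intros H. destruct (Rle_lt_dec 0 h).
  - rewrite !Rabs_right; try lra. apply jordan; rewrite Rabs_right in H; lra.
    apply Rle_ge. apply sin_ge_0; pose proof PI_gt3; rewrite Rabs_right in H; lra.
  - rewrite (Rabs_left h) by lra. rewrite (Rabs_left1 (sin h)).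
    + rewrite <- sin_neg. apply jordan. rewrite Rabs_left in H; lra.
    + rewrite <- (Ropp_involutive h). rewrite sin_neg.
      assert (0 <= sin (-h)). apply sin_ge_0; pose proof PI_gt3; rewrite Rabs_left in H; lra. lra.
Qed.

Lemma chord a b : - (PI/2) <= a <= PI/2 -> - (PI/2) <= b <= PI/2 ->
  2 / PI * Rabs (a - b) <= Cmod (Csub (Cexpi a) (Cexpi b)).
Proof.
  intros Ha Hb. set (h := (a - b) / 2).
  assert (E : Cmod (Csub (Cexpi a) (Cexpi b)) = Rabs (2 * sin h)).
  { unfold Cmod, Csub, Cexpi; cbn [fst snd].
    rewrite <- sqrt_Rsqr_abs. f_equal. unfold Rsqr.
    replace (2 * sin h * (2 * sin h)) with (2 * (1 - cos (2 * h))) by (rewrite cos_2a_sin; ring).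
    replace (2 * h) with (a - b) by (unfold h; field). rewrite cos_minus.
    pose proof (sin2_cos2 a). pose proof (sin2_cos2 b). unfold Rsqr in *. nra. }
  rewrite E, Rabs_mult, (Rabs_right 2) by lra.
  assert (Rabs h <= PI / 2).
  { unfold h. unfold Rdiv. rewrite Rabs_mult, (Rabs_right (/2)) by lra. assert (Rabs (a-b) <= PI) by (apply Rabs_le; lra). lra. }
  pose proof (jordan_abs h H).
  replace (Rabs (a - b)) with (2 * Rabs h). lra.
  unfold h. unfold Rdiv. rewrite Rabs_mult, (Rabs_right (/2)) by lra. field.
Qed.

Definition prodl (f : R -> R) (l : list R) : R := fold_right Rmult 1 (map f l).

Lemma prodl_perm f l l' : Permutation l l' -> prodl f l = prodl f l'.
Proof.
  unfold prodl. induction 1; simpl; try lra.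
  rewrite IHPermutation; ring.
Qed.

Lemma prodl_ge0 f l : (forall x, In x l -> 0 <= f x) -> 0 <= prodl f l.
Proof.
  unfold prodl. induction l; simpl; intros H. lra.
  apply Rmult_le_pos; auto.
Qed.

Lemma list_max (l : list R) : l <> [] -> exists m, In m l /\ forall y, In y l -> y <= m.
Proof.
  induction l as [|a l IH]; intros H. congruence.
  destruct l as [|b l'].
  - exists a. simpl. split; auto. intros y [->|[]]; lra.
  - destruct IH as [m [Hm Hmax]]. discriminate.
    destruct (Rle_lt_dec a m).
    + exists m. split. right; auto. intros y [->|Hy]; auto.
    + exists a. split. left; auto. intros y [->|Hy]. lra. specialize (Hmax y Hy). lra.
Qed.

Lemma right_gap n : forall l t d, length l = n -> 0 < d -> NoDup l ->
  (forall x, In x l -> t + d <= x) ->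
  (forall x y, In x l -> In y l -> x <> y -> d <= Rabs (x - y)) ->
  INR (fact n) * d ^ n <= prodl (fun x => Rabs (x - t)) l /\
  (n = 0%nat \/ exists m, In m l /\ t + INR n * d <= m).
Proof.
  induction n as [|n IH]; intros l t d Hl Hd Hnd Hge Hgap.
  - destruct l; [|discriminate]. unfold prodl; simpl. split; [lra|auto].
  - assert (Hne : l <> []) by (intro; subst; discriminate).
    destruct (list_max l Hne) as [m [Hm Hmax]].
    destruct (in_split _ _ Hm) as [l1 [l2 E]].
    set (l' := l1 ++ l2).
    assert (HP : Permutation l (m :: l')) by (rewrite E; apply Permutation_sym, Permutation_middle).
    assert (Hnd' : NoDup (m :: l')) by (eapply Permutation_NoDup; eauto).
    assert (Hin : forall x, In x l' -> In x l) by (intros x Hx; eapply Permutation_in; [apply Permutation_sym; eauto| right; auto]).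
    assert (Hlen : length l' = n) by (apply Permutation_length in HP; simpl in HP; lia).
    apply NoDup_cons_iff in Hnd'. destruct Hnd' as [Hnin Hnd''].
    destruct (IH l' t d Hlen Hd Hnd'' (fun x Hx => Hge x (Hin x Hx))
                (fun x y Hx Hy => Hgap x y (Hin x Hx) (Hin y Hy))) as [Hprod Hex].
    assert (Hmb : t + INR (S n) * d <= m).
    { rewrite S_INR. destruct Hex as [Hn0|[x [Hx Hxb]]].
      - rewrite Hn0. pose proof (Hge m Hm). simpl INR. lra.
      - assert (x <> m) by (intro; subst; contradiction).
        pose proof (Hgap m x Hm (Hin x Hx) ltac:(auto)).
        pose proof (Hmax x (Hin x Hx)).
        rewrite Rabs_right in H0 by lra. lra. }
    split.
    + rewrite (prodl_perm _ _ _ HP). unfold prodl; simpl; fold (prodl (fun x => Rabs (x - t)) l').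
      replace (fact n + n * fact n)%nat with (S n * fact n)%nat by ring. rewrite mult_INR.
      pose proof (pos_INR (S n)). pose proof (pos_INR (fact n)).
      assert (0 <= d ^ n) by (apply pow_le; lra).
      rewrite (Rabs_right (m - t)) by nra.
      replace (INR (S n) * INR (fact n) * (d * d ^ n)) with ((INR (S n) * d) * (INR (fact n) * d ^ n)) by ring.
      apply Rmult_le_compat; try nra.
    + right. exists m. auto.
Qed.

Lemma d2 m : ((2*m)/2 = m)%nat. Proof. rewrite Nat.mul_comm. apply Nat.div_mul. lia. Qed.
Lemma d2' m : ((2*m+1)/2 = m)%nat. Proof. symmetry. apply (Nat.div_unique _ 2 m 1); lia. Qed.

Lemma fact_bal_aux d : forall a b, (b = a + d)%nat ->
  (fact ((a+b)/2) * fact ((a+b+1)/2) <= fact a * fact b)%nat.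
Proof.
  induction d as [d IH] using lt_wf_ind. intros a b Hb.
  destruct d as [|[|d]].
  - replace (a+b)%nat with (2*a)%nat by lia. replace (2*a+1)%nat with (2*a+1)%nat by lia.
    rewrite d2, d2'. subst. rewrite Nat.add_0_r. lia.
  - replace (a+b)%nat with (2*a+1)%nat by lia. replace (2*a+1+1)%nat with (2*(a+1))%nat by lia.
    rewrite d2, d2'. subst. replace (a+1)%nat with (S a) by lia. lia.
  - specialize (IH d ltac:(lia) (S a) (b - 1)%nat ltac:(lia)).
    replace (S a + (b - 1))%nat with (a + b)%nat in IH by lia.
    eapply Nat.le_trans; [exact IH|].
    replace b with (S (b - 1)) at 2 by lia.
    rewrite !fact_simpl. pose proof (Nat.le_0_l (fact a)).
    assert (S a <= S (b-1))%nat by lia.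
    pose proof (Nat.mul_le_mono_r _ _ (fact a * fact (b-1)) H0). nia.
Qed.

Lemma fact_bal a b : (fact ((a+b)/2) * fact ((a+b+1)/2) <= fact a * fact b)%nat.
Proof.
  destruct (Nat.le_ge_cases a b).
  - apply (fact_bal_aux (b - a)); lia.
  - rewrite (Nat.mul_comm (fact a)). replace (a+b)%nat with (b+a)%nat by lia.
    apply (fact_bal_aux (a - b)); lia.
Qed.

Lemma prodl_split f g l : prodl f l = prodl f (filter g l) * prodl f (filter (fun x => negb (g x)) l).
Proof. unfold prodl. induction l; simpl. ring. destruct (g a); simpl; rewrite IHl; ring. Qed.
Lemma len_split (g : R -> bool) l : (length (filter g l) + length (filter (fun x => negb (g x)) l) = length l)%nat.
Proof. induction l; simpl. auto. destruct (g a); simpl; lia. Qed.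
Lemma NoDup_map_inj (f : R -> R) l : (forall x y, f x = f y -> x = y) -> NoDup l -> NoDup (map f l).
Proof.
  intros Hf. induction 1; simpl; constructor; auto.
  intros Hin. apply in_map_iff in Hin. destruct Hin as [y [Hy Hy']]. apply Hf in Hy. subst. contradiction.
Qed.

Lemma gap_prod l t d : 0 < d -> NoDup l ->
  (forall x, In x l -> d <= Rabs (x - t)) ->
  (forall x y, In x l -> In y l -> x <> y -> d <= Rabs (x - y)) ->
  INR (fact (length l / 2) * fact ((length l + 1) / 2)) * d ^ (length l) <= prodl (fun x => Rabs (x - t)) l.
Proof.
  intros Hd Hnd Ht Hg.
  set (g := fun x => if Rlt_dec x t then true else false).
  set (L := filter g l). set (Rr := filter (fun x => negb (g x)) l).
  assert (HinL : forall x, In x L -> In x l /\ x < t).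
  { intros x Hx. apply filter_In in Hx. destruct Hx as [H1 H2]. unfold g in H2.
    destruct (Rlt_dec x t); [auto|discriminate]. }
  assert (HinR : forall x, In x Rr -> In x l /\ t <= x).
  { intros x Hx. apply filter_In in Hx. destruct Hx as [H1 H2]. unfold g in H2.
    destruct (Rlt_dec x t); [discriminate|split; auto; lra]. }
  assert (HR := right_gap (length Rr) Rr t d eq_refl Hd (NoDup_filter _ Hnd)).
  destruct HR as [HR _].
  { intros x Hx. destruct (HinR x Hx) as [H1 H2]. pose proof (Ht x H1). rewrite Rabs_right in H by lra. lra. }
  { intros x y Hx Hy. apply Hg; [apply HinR|apply HinR]; auto. }
  assert (HL := right_gap (length L) (map Ropp L) (-t) d (length_map _ _) Hd
                  (NoDup_map_inj Ropp L ltac:(intros x0 y0 H0; rewrite <- (Ropp_involutive x0), H0; apply Ropp_involutive) (NoDup_filter _ Hnd))).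
  destruct HL as [HL _].
  { intros y Hy. apply in_map_iff in Hy. destruct Hy as [x [<- Hx]]. destruct (HinL x Hx) as [H1 H2].
    pose proof (Ht x H1). rewrite Rabs_left in H by lra. lra. }
  { intros y z Hy Hz Hyz. apply in_map_iff in Hy. destruct Hy as [x [<- Hx]].
    apply in_map_iff in Hz. destruct Hz as [w [<- Hw]].
    replace (- x - - w) with (- (x - w)) by ring. rewrite Rabs_Ropp.
    apply Hg; [apply HinL|apply HinL|]; auto. lra. }
  assert (EL : prodl (fun y => Rabs (y - - t)) (map Ropp L) = prodl (fun x => Rabs (x - t)) L).
  { unfold prodl. rewrite map_map. f_equal. apply map_ext. intros x.
    rewrite <- Rabs_Ropp. f_equal. ring. }
  rewrite EL in HL.
  rewrite (prodl_split _ g l). fold L Rr.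
  pose proof (len_split g l) as Hlen. fold L Rr in Hlen.
  rewrite <- Hlen.
  pose proof (fact_bal (length L) (length Rr)) as Hf. apply le_INR in Hf. rewrite !mult_INR in Hf |- *. rewrite mult_INR in Hf.
  rewrite pow_add.
  pose proof (pos_INR (fact (length L))). pose proof (pos_INR (fact (length Rr))).
  assert (0 <= d ^ length L) by (apply pow_le; lra).
  assert (0 <= d ^ length Rr) by (apply pow_le; lra).
  pose proof (pos_INR (fact ((length L + length Rr) / 2))).
  pose proof (pos_INR (fact ((length L + length Rr + 1) / 2))).
  apply Rle_trans with (INR (fact (length L)) * INR (fact (length Rr)) * (d ^ length L * d ^ length Rr)).
  - apply Rmult_le_compat_r. nra. exact Hf.
  - replace (INR (fact (length L)) * INR (fact (length Rr)) * (d ^ length L * d ^ length Rr))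
      with ((INR (fact (length L)) * d ^ length L) * (INR (fact (length Rr)) * d ^ length Rr)) by ring.
    apply Rmult_le_compat; auto; nra.
Qed.

Lemma zeta_eq k : (1 <= k)%nat -> zeta k = INR (fact ((k - 1) / 2) * fact (k / 2)).
Proof.
  intros Hk. unfold zeta. destruct (Nat.Even_or_Odd k) as [[m Hm]|[m Hm]]; subst.
  - rewrite Nat.odd_even. destruct m as [|m]; [lia|].
    replace (2 * S m - 1)%nat with (2 * m + 1)%nat by lia.
    replace (2 * S m - 2)%nat with (2 * m)%nat by lia.
    rewrite d2', d2, d2, mult_INR. ring.
  - rewrite Nat.odd_odd. replace (2 * m + 1 - 1)%nat with (2 * m)%nat by lia.
    rewrite d2, d2', mult_INR. ring.
Qed.

Lemma fold_min_le x t y : In y (x :: t) -> fold_right Rmin x t <= y.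
Proof.
  revert y. induction t as [|b t IH]; simpl; intros y Hy.
  - destruct Hy as [->|[]]; lra.
  - destruct Hy as [->|[->|Hy]].
    + pose proof (IH y (or_introl eq_refl)). pose proof (Rmin_r b (fold_right Rmin y t)). lra.
    + apply Rmin_l.
    + pose proof (IH y (or_intror Hy)). pose proof (Rmin_r b (fold_right Rmin x t)). lra.
Qed.

Lemma fold_min_pos x t : (forall y, In y (x :: t) -> 0 < y) -> 0 < fold_right Rmin x t.
Proof.
  induction t as [|b t IH]; simpl; intros H. apply H; auto.
  apply Rmin_glb_lt. apply H; auto. apply IH. intros y [->|Hy]; apply H; auto.
Qed.

Lemma in_tmlist theta k y : In y (flat_map (fun p => map (fun j => Rabs (theta p - theta j))
              (filter (fun j => negb (Nat.eqb p j)) (seq 0 k))) (seq 0 k)) <->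
  exists p j, (p < k)%nat /\ (j < k)%nat /\ p <> j /\ y = Rabs (theta p - theta j).
Proof.
  rewrite in_flat_map. split.
  - intros [p [Hp Hy]]. apply in_map_iff in Hy. destruct Hy as [j [<- Hj]].
    apply filter_In in Hj. destruct Hj as [Hj Hn]. apply in_seq in Hp. apply in_seq in Hj.
    exists p, j. repeat split; try lia. intros ->. rewrite Nat.eqb_refl in Hn. discriminate.
  - intros [p [j [Hp [Hj [Hpj ->]]]]]. exists p. split. apply in_seq; lia.
    apply in_map_iff. exists j. split; auto. apply filter_In. split. apply in_seq; lia.
    destruct (Nat.eqb_spec p j); auto.
Qed.

Lemma tm_props theta k : (2 <= k)%nat ->
  (forall p j, (p < k)%nat -> (j < k)%nat -> p <> j -> theta p <> theta j) ->
  0 < theta_min theta k /\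
  (forall p j, (p < k)%nat -> (j < k)%nat -> p <> j -> theta_min theta k <= Rabs (theta p - theta j)).
Proof.
  intros Hk Hd. unfold theta_min.
  set (l := flat_map _ (seq 0 k)).
  assert (Hin : forall y, In y l <-> exists p j, (p < k)%nat /\ (j < k)%nat /\ p <> j /\ y = Rabs (theta p - theta j))
    by (intros; apply in_tmlist).
  destruct l as [|x t] eqn:El.
  - exfalso. destruct (proj2 (Hin (Rabs (theta 0%nat - theta 1%nat)))) as [].
    exists 0%nat, 1%nat. repeat split; lia.
  - split.
    + apply fold_min_pos. intros y Hy. apply Hin in Hy. destruct Hy as [p [j [Hp [Hj [Hpj ->]]]]].
      apply Rabs_pos_lt. intros H. apply (Hd p j Hp Hj Hpj). lra.
    + intros p j Hp Hj Hpj. apply fold_min_le. apply Hin. exists p, j. auto.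
Qed.

Lemma rinf_lt n v B : 0 < B -> (forall j, (j < n)%nat -> Rabs (v j) < B) -> Rinf_norm n v < B.
Proof.
  intros HB H. unfold Rinf_norm.
  assert (forall x, In x (map (fun j => Rabs (v j)) (seq 0 n)) -> x < B).
  { intros x Hx. apply in_map_iff in Hx. destruct Hx as [j [<- Hj]]. apply in_seq in Hj. apply H; lia. }
  induction (map (fun j => Rabs (v j)) (seq 0 n)); simpl. auto.
  apply Rmax_lub_lt. apply H0; simpl; auto. apply IHl. intros; apply H0; simpl; auto.
Qed.

Lemma fold_app (l1 l2 : list R) : fold_right Rmult 1 (l1 ++ l2) = fold_right Rmult 1 l1 * fold_right Rmult 1 l2.
Proof. induction l1; simpl. ring. rewrite IHl1. ring. Qed.

Lemma fold_nonneg (g : nat -> R) L : (forall p, In p L -> 0 <= g p) -> 0 <= fold_right Rmult 1 (map g L).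
Proof. induction L; simpl; intros H. lra. apply Rmult_le_pos; auto. Qed.

Lemma fold_mono (f g : nat -> R) L : (forall p, In p L -> 0 <= g p <= f p) ->
  fold_right Rmult 1 (map g L) <= fold_right Rmult 1 (map f L).
Proof.
  induction L; simpl; intros H. lra.
  assert (0 <= fold_right Rmult 1 (map g L)) by (apply fold_nonneg; intros; apply H; auto).
  destruct (H a (or_introl eq_refl)).
  apply Rmult_le_compat; auto.
Qed.

Lemma fold_scal (h : nat -> R) c L : fold_right Rmult 1 (map (fun p => c * h p) L) = c ^ length L * fold_right Rmult 1 (map h L).
Proof. induction L; simpl. ring. rewrite IHL. ring. Qed.

Lemma fold_ones ws : (forall w, In w ws -> Cmod w = 1) -> fold_right Rmult 1 (map (fun w => 1 + Cmod w) ws) = 2 ^ length ws.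
Proof. induction ws; simpl; intros H. auto. rewrite IHws, H; auto; ring. Qed.

Lemma Cmod_expi t : Cmod (Cexpi t) = 1.
Proof. unfold Cmod, Cexpi; cbn [fst snd]. rewrite <- sqrt_1. f_equal. pose proof (sin2_cos2 t). unfold Rsqr in H. nra. Qed.

Lemma len_filter_neq k j : (j < k)%nat -> length (filter (fun p => negb (Nat.eqb p j)) (seq 0 k)) = (k - 1)%nat.
Proof.
  induction k; intros Hj. lia. rewrite seq_S, filter_app, length_app. simpl.
  destruct (Nat.eq_dec j k).
  - subst. rewrite Nat.eqb_refl. simpl.
    assert (forall m, (m <= k)%nat -> length (filter (fun p => negb (Nat.eqb p k)) (seq 0 m)) = m).
    { induction m; intros Hm. reflexivity. rewrite seq_S, filter_app, length_app. simpl.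
      destruct (Nat.eqb_spec m k); [lia|]. simpl. rewrite IHm; lia. }
    rewrite H; lia.
  - destruct (Nat.eqb_spec k j); [lia|]. simpl. rewrite IHk; lia.
Qed.

Lemma NoDup_map_inj_on (f : nat -> R) L : NoDup L -> (forall p q, In p L -> In q L -> f p = f q -> p = q) -> NoDup (map f L).
Proof.
  induction 1; simpl; intros Hf; constructor.
  - intros Hin. apply in_map_iff in Hin. destruct Hin as [y [Hy Hy']].
    assert (y = x) by (apply Hf; simpl; auto). subst. contradiction.
  - apply IHNoDup. intros; apply Hf; simpl; auto.
Qed.

Lemma key_identity n s k (c : nat -> Cplx) zs as_ :
  Csum n (fun r => Cmul (c r) (matvec s k zs as_ r)) = Csum k (fun l => Cmul (as_ l) (peval n c (zs l))).
Proof.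
  unfold matvec, phi.
  rewrite (Csum_ext n _ (fun r => Csum k (fun l => Cmul (as_ l) (Cmul (c r) (Cpow (zs l) r))))).
  2:{ intros r _. rewrite <- Csum_mull. apply Csum_ext. intros. ceq. }
  rewrite Csum_swap. apply Csum_ext. intros l _. unfold peval. now rewrite Csum_mull.
Qed.

Theorem theorem3p3 (k : nat) (hk : (2 <= k)%nat)
  (theta thetah : nat -> R) (a ah : nat -> Cplx) (mmin sigma : R)
  (Hth : forall j, (j < k)%nat -> - (PI / 2) <= theta j <= PI / 2)
  (Hthd : forall p j, (p < k)%nat -> (j < k)%nat -> p <> j -> theta p <> theta j)
  (Hmmin : 0 < mmin)
  (Ha : forall j, (j < k)%nat -> mmin <= Cmod (a j))
  (Hthh : forall j, (j < k)%nat -> - (PI / 2) <= thetah j <= PI / 2)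
  (Hthhd : forall p j, (p < k)%nat -> (j < k)%nat -> p <> j -> thetah p <> thetah j)
  (Hres : Cnorm2 (2 * k)
            (fun r => Csub (matvec (2 * k - 1) k (fun j => Cexpi (thetah j)) ah r)
                           (matvec (2 * k - 1) k (fun j => Cexpi (theta j)) a r))
          < sigma) :
  Rinf_norm k (eta k k (fun j => Cexpi (theta j)) (fun l => Cexpi (thetah l)))
  < 2 ^ k * PI ^ (k - 1) / (zeta k * theta_min theta k ^ (k - 1)) * (sigma / mmin).
Proof.
  set (z := fun j => Cexpi (theta j)). set (zh := fun l => Cexpi (thetah l)).
  set (res := fun r => Csub (matvec (2 * k - 1) k zh ah r) (matvec (2 * k - 1) k z a r)).
  set (Nr := Cnorm2 (2 * k) res). fold z zh res Nr in Hres |- *.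
  destruct (tm_props theta k hk Hthd) as [Htm_pos Htm_le].
  set (tm := theta_min theta k). fold tm in Htm_pos, Htm_le |- *.
  assert (HNr : 0 <= Nr) by (unfold Nr, Cnorm2; apply sqrt_pos).
  assert (HZ : zeta k = INR (fact ((k - 1) / 2) * fact (k / 2))) by (apply zeta_eq; lia).
  assert (HZpos : 0 < zeta k).
  { rewrite HZ, mult_INR. apply Rmult_lt_0_compat; apply lt_0_INR, lt_O_fact. }
  assert (HPI : 0 < PI) by apply PI_RGT_0.
  set (B := 2 ^ k * PI ^ (k - 1) / (zeta k * tm ^ (k - 1)) * (sigma / mmin)).
  assert (HTpos : 0 < tm ^ (k - 1)) by (apply pow_lt; lra).
  assert (HB : 0 < B).
  { unfold B. apply Rmult_lt_0_compat. apply Rdiv_lt_0_compat.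
    apply Rmult_lt_0_compat; apply pow_lt; lra. apply Rmult_lt_0_compat; lra.
    apply Rdiv_lt_0_compat; lra. }
  apply rinf_lt; auto.
  intros j Hj.
  set (F := filter (fun p => negb (Nat.eqb p j)) (seq 0 k)).
  assert (HFin : forall p, In p F <-> (p < k)%nat /\ p <> j).
  { intros p. unfold F. rewrite filter_In, in_seq. destruct (Nat.eqb_spec p j); simpl; intuition lia. }
  assert (HFlen : length F = (k - 1)%nat) by (apply len_filter_neq; auto).
  set (ws := map zh (seq 0 k) ++ map z F).
  assert (Hwslen : length ws = (2 * k - 1)%nat) by (unfold ws; rewrite length_app, !length_map, length_seq; lia).
  set (c := pcoef ws).
  set (S := Csum (2 * k) (fun r => Cmul (c r) (res r))).
  assert (HS : S = Csub C0 (Cmul (a j) (cprod ws (z j)))).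
  { unfold S, res.
    rewrite (Csum_ext _ _ (fun r => Csub (Cmul (c r) (matvec (2 * k - 1) k zh ah r)) (Cmul (c r) (matvec (2 * k - 1) k z a r)))).
    2:{ intros; ceq. }
    rewrite Csum_sub, !key_identity.
    unfold c. rewrite (Csum_ext k _ (fun l => Cmul (ah l) (cprod ws (zh l)))).
    2:{ intros. rewrite peval_pcoef by lia. reflexivity. }
    rewrite (Csum_ext k (fun l => Cmul (a l) (peval (2 * k) (pcoef ws) (z l))) (fun l => Cmul (a l) (cprod ws (z l)))).
    2:{ intros. rewrite peval_pcoef by lia. reflexivity. }
    rewrite Csum_zero.
    2:{ intros l Hl. rewrite cprod_zero. ceq. unfold ws. apply in_or_app. left. apply in_map. apply in_seq. lia. }
    rewrite (Csum_single k j); auto.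
    intros p Hp Hpj. rewrite cprod_zero. ceq. unfold ws. apply in_or_app. right. apply in_map. apply HFin. auto. }
  assert (Hup : Cmod S <= 2 ^ (2 * k - 1) * Nr).
  { eapply Rle_trans. apply Cmod_Csum.
    eapply Rle_trans. apply (Rsum_le _ _ (fun r => Cmod (c r) * Nr)).
    { intros r Hr. rewrite Cmod_mul. apply Rmult_le_compat_l. apply Cmod_ge0. apply Cmod_le_norm2; auto. }
    rewrite Rsum_mulr. apply Rmult_le_compat_r; auto.
    eapply Rle_trans. apply Rsum_pcoef. rewrite fold_ones. rewrite Hwslen. lra.
    intros w Hw. unfold ws in Hw. apply in_app_or in Hw. destruct Hw as [Hw|Hw];
      apply in_map_iff in Hw; destruct Hw as [x [<- _]]; apply Cmod_expi. }
  set (Q := fold_right Rmult 1 (map (fun p => Cmod (Csub (z j) (z p))) F)).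
  set (E := eta k k z zh j).
  assert (HSmod : Cmod S = Cmod (a j) * (E * Q)).
  { rewrite HS, Cmod_opp_sub, Cmod_mul, Cmod_cprod. f_equal. unfold ws. rewrite map_app, fold_app, !map_map.
    reflexivity. }
  assert (HE : 0 <= E).
  { unfold E, eta, Rprod. apply fold_nonneg. intros; apply Cmod_ge0. }
  assert (HQ : (2 / PI) ^ (k - 1) * (zeta k * tm ^ (k - 1)) <= Q).
  { apply Rle_trans with (fold_right Rmult 1 (map (fun p => 2 / PI * Rabs (theta p - theta j)) F)).
    - rewrite fold_scal, HFlen. apply Rmult_le_compat_l. apply pow_le. apply Rlt_le, Rdiv_lt_0_compat; lra.
      pose proof (gap_prod (map theta F) (theta j) tm Htm_pos) as G.
      rewrite length_map, HFlen in G. replace (k - 1 + 1)%nat with k in G by lia.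
      rewrite HZ. unfold prodl in G. rewrite map_map in G. apply G.
      + apply NoDup_map_inj_on. unfold F. apply NoDup_filter, seq_NoDup.
        intros p q Hp Hq Hpq. apply HFin in Hp. apply HFin in Hq.
        destruct (Nat.eq_dec p q); auto. exfalso. apply (Hthd p q); intuition.
      + intros x Hx. apply in_map_iff in Hx. destruct Hx as [p [<- Hp]]. apply HFin in Hp. apply Htm_le; intuition.
      + intros x y Hx Hy Hxy. apply in_map_iff in Hx. destruct Hx as [p [<- Hp]].
        apply in_map_iff in Hy. destruct Hy as [q [<- Hq]]. apply HFin in Hp. apply HFin in Hq.
        destruct Hp, Hq. apply Htm_le; auto; intros ->; apply Hxy; reflexivity.
    - apply fold_mono. intros p Hp. apply HFin in Hp. split.
      + apply Rmult_le_pos. apply Rlt_le, Rdiv_lt_0_compat; lra. apply Rabs_pos.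
      + rewrite Rabs_minus_sym. unfold z. apply chord; apply Hth; intuition. }
  rewrite Rabs_right by lra. fold E.
  assert (HP : 0 < (2 / PI) ^ (k - 1)) by (apply pow_lt, Rdiv_lt_0_compat; lra).
  assert (Hkey : B * mmin * ((2 / PI) ^ (k - 1) * (zeta k * tm ^ (k - 1))) = 2 ^ (2 * k - 1) * sigma).
  { unfold B. replace (2 * k - 1)%nat with (k + (k - 1))%nat by lia. rewrite pow_add.
    unfold Rdiv. rewrite Rpow_mult_distr, pow_inv. field. repeat split; try lra; apply pow_nonzero; lra. }
  assert (Hma : mmin <= Cmod (a j)) by auto.
  assert (H2p : 0 < 2 ^ (2 * k - 1)) by (apply pow_lt; lra).
  destruct (Rlt_le_dec E B) as [|HEB]; auto. exfalso.
  assert (0 < (2 / PI) ^ (k - 1) * (zeta k * tm ^ (k - 1))) by (repeat apply Rmult_lt_0_compat; lra).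
  assert (HQpos : 0 < Q) by lra.
  assert (mmin * B * Q <= Cmod (a j) * (E * Q)).
  { replace (Cmod (a j) * (E * Q)) with (Cmod (a j) * E * Q) by ring. apply Rmult_le_compat_r. lra.
    apply Rmult_le_compat; lra. }
  assert (mmin * B * ((2 / PI) ^ (k - 1) * (zeta k * tm ^ (k - 1))) <= mmin * B * Q).
  { apply Rmult_le_compat_l; nra. }
  assert (2 ^ (2 * k - 1) * Nr < 2 ^ (2 * k - 1) * sigma) by (apply Rmult_lt_compat_l; lra).
  lra.
Qed.
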